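(* Let $K\ge L\ge T\ge 2$, let $x$ be a positive integer coprime to $q$, and let $\mathrm{CAT}_x(K,L,T)$, $y$, $q$ be as in the context. Suppose that $ix\not\equiv jy\pmod q$ for all integer pairs $(i,j)$ with (1) $i\in\{-L,\dots,-1\}$, $j\in\{-K-T+2,\dots,K-1\}$, or (2) $i\in\{-L+1,\dots,T+L-2\}$, $j\in\{-K,\dots,-1\}$, or (3) $i\in\{-L,\dots,T-2\}$, $j\in\{-K-T+1,\dots,-1\}$. Then $|\mathcal{TL}|=KL$ and $\mathcal{TL}\cap\mathcal{TR}=\mathcal{TL}\cap\mathcal{BL}=\mathcal{TL}\cap\mathcal{BR}=\emptyset$.
   Context: Let $\kappa,\lambda$ be the smallest non-negative integers such that $K+1+\kappa$ and $L+1+\lambda$ are coprime to $T-1$; $K^\star=K+1+\kappa$, $L^\star=L+1+\lambda$, $\bar T=T-1$, $q=K^\star L^\star+\bar T^2$. For $x$ coprime to $q$, $y\in\{0,\dots,q-1\}$ is the unique integer with $x\bar T+yK^\star\equiv0\pmod q$. $\mathrm{CAT}_x(K,L,T)$ consists of $q$ and the vectors over $\mathbb{Z}_q$: $\boldsymbol{\alpha}^{(p)}=(ky)_{k=0}^{K-1}$, $\boldsymbol{\alpha}^{(s)}=(Ky+kx)_{k=0}^{T-1}$, $\boldsymbol{\beta}^{(p)}=(kx)_{k=0}^{L-1}$, $\boldsymbol{\beta}^{(s)}=(ky-x)_{k=0}^{T-1}$, all mod $q$. With $\{\mathbf v\}$ the set of entries and sumsets in $\mathbb{Z}_q$: $\mathcal{TL}=\{\boldsymbol{\alpha}^{(p)}\}+\{\boldsymbol{\beta}^{(p)}\}$,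 $\mathcal{TR}=\{\boldsymbol{\alpha}^{(p)}\}+\{\boldsymbol{\beta}^{(s)}\}$, $\mathcal{BL}=\{\boldsymbol{\alpha}^{(s)}\}+\{\boldsymbol{\beta}^{(p)}\}$, $\mathcal{BR}=\{\boldsymbol{\alpha}^{(s)}\}+\{\boldsymbol{\beta}^{(s)}\}$. *)

(* Defs.v *)
From HB Require Import structures.
From mathcomp Require Import all_boot all_order all_algebra.
Set Implicit Arguments. Unset Strict Implicit. Unset Printing Implicit Defensive.
Import Order.TTheory GRing.Theory Num.Theory.

(* Smallest k >= 0 with coprime (n + k) m.  For m >= 1 the value k = n*(m-1)+1
   works (n + k = n*m + 1), and it lies below the search bound, so [find]
   returns the true minimum. *)
Definition least_coprime_shift (n m : nat) : nat :=
  find (fun k => coprime (n + k) m) (iota 0 (n * m).+2).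

Definition kappa (K T : nat) : nat := least_coprime_shift K.+1 T.-1.
Definition lambda (L T : nat) : nat := least_coprime_shift L.+1 T.-1.
Definition Kstar (K T : nat) : nat := K.+1 + kappa K T.
Definition Lstar (L T : nat) : nat := L.+1 + lambda L T.
Definition Tbar (T : nat) : nat := T.-1.
Definition qmod (K L T : nat) : nat := Kstar K T * Lstar L T + Tbar T ^ 2.

Definition yval (K L T x : nat) : nat :=
  find (fun y => (x * Tbar T + y * Kstar K T) %% qmod K L T == 0)%N
       (iota 0 (qmod K L T)).

Local Open Scope ring_scope.

Definition alpha_p (K L T x : nat) : seq int :=
  [seq ((k%:Z * (yval K L T x)%:Z) %% (qmod K L T)%:Z)%Z | k <- iota 0 K].
Definition alpha_s (K L T x : nat) : seq int :=
  [seq ((K%:Z * (yval K L T x)%:Z + k%:Z * x%:Z) %% (qmod K L T)%:Z)%Z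
  | k <- iota 0 T].
Definition beta_p (K L T x : nat) : seq int :=
  [seq ((k%:Z * x%:Z) %% (qmod K L T)%:Z)%Z | k <- iota 0 L].
Definition beta_s (K L T x : nat) : seq int :=
  [seq ((k%:Z * (yval K L T x)%:Z - x%:Z) %% (qmod K L T)%:Z)%Z
  | k <- iota 0 T].

(* sumset in Z_q of the entry sets of two vectors (as a list; duplicates
   are irrelevant: cardinality is taken after [undup]) *)
Definition sumset (q : nat) (A B : seq int) : seq int :=
  [seq ((a + b) %% q%:Z)%Z | a <- A, b <- B].

Definition TL K L T x := sumset (qmod K L T) (alpha_p K L T x) (beta_p K L T x).
Definition TR K L T x := sumset (qmod K L T) (alpha_p K L T x) (beta_s K L T x).
Definition BL K L T x := sumset (qmod K L T) (alpha_s K L T x) (beta_p K L T x).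
Definition BR K L T x := sumset (qmod K L T) (alpha_s K L T x) (beta_s K L T x).

Definition disj (A B : seq int) : Prop := forall z, z \in A -> z \notin B.

(* Main.v *)
Require Import Defs.
From HB Require Import structures.
From mathcomp Require Import all_boot all_order all_algebra.
From mathcomp Require Import ring zify.
Import Order.TTheory GRing.Theory Num.Theory.
Local Open Scope ring_scope.

Lemma modeq_dvd (q a b c d : int) :
  (((a %% q)%Z + (b %% q)%Z) %% q = ((c %% q)%Z + (d %% q)%Z) %% q)%Z ->
  (q %| (a + b) - (c + d))%Z.
Proof. by rewrite !modzDm => E; rewrite -eqz_mod_dvd E. Qed.

Lemma dvd_conc (q A B u v : int) :
  (q %| A - B)%Z -> (u - v = A - B \/ u - v = - (A - B)) ->
  (u == v %[mod q])%Z.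
Proof.
move=> HD [E|E]; rewrite eqz_mod_dvd E //.
by rewrite rpredN.
Qed.

Arguments modeq_dvd {q a b c d}.
Arguments dvd_conc {q A B u v}.

Theorem lemma4 (K L T x : nat) :
  (L <= K)%N -> (T <= L)%N -> (2 <= T)%N ->
  (0 < x)%N -> coprime x (qmod K L T) ->
  (forall i j : int,
      ((- L%:Z <= i <= -1) && (- K%:Z - T%:Z + 2 <= j <= K%:Z - 1)) ||
      ((- L%:Z + 1 <= i <= T%:Z + L%:Z - 2) && (- K%:Z <= j <= -1)) ||
      ((- L%:Z <= i <= T%:Z - 2) && (- K%:Z - T%:Z + 1 <= j <= -1)) ->
      (i * x%:Z != j * (yval K L T x)%:Z %[mod (qmod K L T)%:Z])%Z) ->
  size (undup (TL K L T x)) = (K * L)%N /\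
  disj (TL K L T x) (TR K L T x) /\
  disj (TL K L T x) (BL K L T x) /\
  disj (TL K L T x) (BR K L T x).
Proof.
move=> LK TL2 T2 x0 _ H.
set y := yval K L T x; set q := qmod K L T.
have HTL : TL K L T x = [seq ((((k%:Z * y%:Z) %% q%:Z)%Z + ((l%:Z * x%:Z) %% q%:Z)%Z) %% q%:Z)%Z
                          | k <- iota 0 K, l <- iota 0 L].
  by rewrite /TL /sumset /alpha_p /beta_p allpairs_mapl allpairs_mapr.
split; [|split; [|split]].
- rewrite undup_id HTL ?size_allpairs ?size_iota //.
  apply: allpairs_uniq; rewrite ?iota_uniq //.
  move=> [k l] [k' l'] /allpairsP [[a b] /= [Ha Hb [-> ->]]]
         /allpairsP [[a' b'] /= [Ha' Hb' [-> ->]]] /= E.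
  move: Ha Hb Ha' Hb'; rewrite !mem_iota !add0n => Ha Hb Ha' Hb'.
  have HD := modeq_dvd E.
  case: (ltngtP b b') => Hbb.
  + exfalso; apply: (negP (H (b%:Z - b'%:Z) (a'%:Z - a%:Z) _)).
      apply/orP; left; apply/orP; left; apply/andP; split; apply/andP; split; clear -LK TL2 T2 Ha Hb Ha' Hb' Hbb; lia.
    apply: (dvd_conc HD); first [left; ring | right; ring].
  + exfalso; apply: (negP (H (b'%:Z - b%:Z) (a%:Z - a'%:Z) _)).
      apply/orP; left; apply/orP; left; apply/andP; split; apply/andP; split; clear -LK TL2 T2 Ha Hb Ha' Hb' Hbb; lia.
    apply: (dvd_conc HD); first [left; ring | right; ring].
  + subst b'; case: (ltngtP a a') => Haa.
    * exfalso; apply: (negP (H 0 (a%:Z - a'%:Z) _)).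
        apply/orP; left; apply/orP; right; apply/andP; split; apply/andP; split; clear -LK TL2 T2 Ha Hb Ha' Hb' Haa; lia.
      apply: (dvd_conc HD); first [left; ring | right; ring].
    * exfalso; apply: (negP (H 0 (a'%:Z - a%:Z) _)).
        apply/orP; left; apply/orP; right; apply/andP; split; apply/andP; split; clear -LK TL2 T2 Ha Hb Ha' Hb' Haa; lia.
      apply: (dvd_conc HD); first [left; ring | right; ring].
    * by subst a'.
- rewrite HTL /TR /sumset /alpha_p /beta_s allpairs_mapl allpairs_mapr.
  move=> z /allpairsP [[k l] /= [Hk Hl ->]]; apply/negP.
  move=> /allpairsP [[k' l'] /= [Hk' Hl' E]].
  move: Hk Hl Hk' Hl'; rewrite !mem_iota !add0n => Hk Hl Hk' Hl'.
  have HD := modeq_dvd E.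
  apply: (negP (H (- (l%:Z + 1)) (k%:Z - k'%:Z - l'%:Z) _)).
    apply/orP; left; apply/orP; left; apply/andP; split; apply/andP; split; clear -LK TL2 T2 Hk Hl Hk' Hl'; lia.
  apply: (dvd_conc HD); first [left; ring | right; ring].
- rewrite HTL /BL /sumset /alpha_s /beta_p allpairs_mapl allpairs_mapr.
  move=> z /allpairsP [[k l] /= [Hk Hl ->]]; apply/negP.
  move=> /allpairsP [[k' l'] /= [Hk' Hl' E]].
  move: Hk Hl Hk' Hl'; rewrite !mem_iota !add0n => Hk Hl Hk' Hl'.
  have HD := modeq_dvd E.
  apply: (negP (H (k'%:Z + l'%:Z - l%:Z) (k%:Z - K%:Z) _)).
    apply/orP; left; apply/orP; right; apply/andP; split; apply/andP; split; clear -LK TL2 T2 Hk Hl Hk' Hl'; lia.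
  apply: (dvd_conc HD); first [left; ring | right; ring].
- rewrite HTL /BR /sumset /alpha_s /beta_s allpairs_mapl allpairs_mapr.
  move=> z /allpairsP [[k l] /= [Hk Hl ->]]; apply/negP.
  move=> /allpairsP [[k' l'] /= [Hk' Hl' E]].
  move: Hk Hl Hk' Hl'; rewrite !mem_iota !add0n => Hk Hl Hk' Hl'.
  have HD := modeq_dvd E.
  apply: (negP (H (k'%:Z - l%:Z - 1) (k%:Z - K%:Z - l'%:Z) _)).
    apply/orP; right; apply/andP; split; apply/andP; split; clear -LK TL2 T2 Hk Hl Hk' Hl'; lia.
  apply: (dvd_conc HD); first [left; ring | right; ring].
Qed.
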